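(* The graphs $W^{k-1}_{k-i+1}= W(k-1,k-2,\dots,k-i+1)$ satisfy: (1) $W^{k-1}_{k-i+1}$ can be properly $(k-1)$-colored so that at most $i$ different colors appear at active vertices and so that among active vertices, only one vertex of our choosing gets the $i$th color. (2) In any $(k-1)$-coloring of $W^{k-1}_{k-i+1}$, at least $i$ different colors occur as the colors of active vertices. (3) If any edge from $W^{k-1}_{k-i+1}$ is removed, it can be properly $(k-1)$-colored so that at most $i-1$ colors occur at active vertices.
   Context: Fix $k\geq 4$ and a $(k-1)$-critical graph $M_{k-1}$ containing no triangles and no pentagons. Form $\bar M_{k-1}$ by adding, for each vertex $v$ of $M_{k-1}$, a new vertex $\bar v$ joined to every vertex of the neighborhood $\Gamma(v)\subseteq M_{k-1}$; the edges of $M_{k-1}$ are Type 1 edges, the newly added edges are Type 2 edges, and the new vertices $\bar v$ are the forward vertices (they form an independent set). For $2\leq r\leq k-1$, the graph $M^r_{k-1}\subseteq \bar M_{k-1}$ is obtained by removing Type 2 edges one by one (discarding any forward vertices isolated by this process) until no further Type 2 edge can be removed without the result admitting a $(k-1)$-coloring in which only $r-1$ colors appear at forward vertices. Denote by $F(M)$ the set of forward vertices of such a graph $M$. Given $r_1,\dots,r_t$, the graph $W(r_1,\dots,r_t)$ is the disjoint union of graphs $M^{r_i}_{k-1}$, $1\leq i\leq t$, together with an independent ''active set'' $A=\prod_i F(M^{r_i}_{k-1})$, where for each $i$ every forward vertex $\bar v\in F(M^{r_i}_{k-1})$ is joined to all vertices $u\in A$ whose $i$th coordinate equals $\bar v$.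 Set $W^{k-1}_{k-i+1}= W(k-1,k-2,\dots,k-i+1)$ (for $i=1$ this is interpreted as a single active vertex). *)

(* Defs.v *)
From mathcomp Require Import all_boot.
Set Implicit Arguments. Unset Strict Implicit. Unset Printing Implicit Defensive.

Definition proper_col (T : finType) (E : rel T) (n : nat) (c : T -> 'I_n) : Prop :=
  forall x y, E x y -> c x != c y.

Definition colorable (T : finType) (E : rel T) (n : nat) : Prop :=
  exists c : T -> 'I_n, proper_col E c.

Definition simple_graph (V : finType) (e : rel V) : Prop :=
  symmetric e /\ irreflexive e.

Definition del_edge (T : finType) (E : rel T) (a b : T) : rel T :=
  fun x y => E x y && ~~ (((x == a) && (y == b)) || ((x == b) && (y == a))).

(* remove the vertex v (its incident edges; v itself is then isolated, which
   does not affect colorability) *)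
Definition del_vertex (T : finType) (E : rel T) (v : T) : rel T :=
  fun x y => [&& x != v, y != v & E x y].

Definition critical (V : finType) (e : rel V) (n : nat) : Prop :=
  [/\ ~ colorable e n.-1, colorable e n,
      (forall a b, e a b -> colorable (del_edge e a b) n.-1)
    & (forall v, colorable (del_vertex e v) n.-1)].

Definition triangle_free (V : finType) (e : rel V) : Prop :=
  forall x y z, ~~ [&& e x y, e y z & e z x].

Definition pentagon_free (V : finType) (e : rel V) : Prop :=
  forall x0 x1 x2 x3 x4 : V, uniq [:: x0; x1; x2; x3; x4] ->
    ~~ [&& e x0 x1, e x1 x2, e x2 x3, e x3 x4 & e x4 x0].

(* Vertices of \bar M : inl v = original vertex v, inr v = forward vertex \bar v.
   A subgraph of \bar M keeping all Type 1 edges is given by its set S of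
   Type 2 edges, a pair (v,u) in S standing for the edge \bar v -- u. *)
Definition Mbar_edge (V : finType) (e : rel V) (S : {set V * V}) : rel (V + V) :=
  fun x y => match x, y with
  | inl u, inl v => e u v
  | inr v, inl u => (v, u) \in S
  | inl u, inr v => (v, u) \in S
  | inr _, inr _ => false
  end.

(* all Type 2 edges: \bar v joined to every u in Gamma(v) *)
Definition type2_full (V : finType) (e : rel V) : {set V * V} :=
  [set p | e p.1 p.2].

(* forward vertices remaining (those not isolated) *)
Definition fwd (V : finType) (S : {set V * V}) : {set V} :=
  [set v | [exists u, (v, u) \in S]].

Definition fwd_colors (V : finType) (n : nat) (S : {set V * V}) (c : V + V -> 'I_n)
  : {set 'I_n} := [set c (inr v) | v in fwd S].

Definition admits (V : finType) (n r : nat) (e : rel V) (S : {set V * V}) : Prop :=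
  exists c : V + V -> 'I_n, proper_col (Mbar_edge e S) c /\ #|fwd_colors S c| <= r.-1.

Definition removal_step (V : finType) (n r : nat) (e : rel V) (S S' : {set V * V})
  : Prop := exists2 p, p \in S & S' = S :\ p /\ ~ admits n r e S'.

Inductive reachable (T : Type) (R : T -> T -> Prop) (x : T) : T -> Prop :=
  | reach_refl : reachable R x x
  | reach_step y z : reachable R x y -> R y z -> reachable R x z.

(* S is (the Type 2 edge set of) a possible outcome M^r_{n} of the process *)
Definition is_Mr (V : finType) (n r : nat) (e : rel V) (S : {set V * V}) : Prop :=
  reachable (removal_step n r e) (type2_full e) S /\
  forall S', ~ removal_step n r e S S'.

(* vertices: inl (j, x) = vertex x of the j-th copy (of \bar M restricted);
             inr f      = active vertex (f j = label of its j-th coordinate) *)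
Definition WT (V : finType) (t : nat) : finType :=
  (('I_t * (V + V)) + {ffun 'I_t -> V})%type.

Definition active (V : finType) (t : nat) (S : 'I_t -> {set V * V})
  : {set {ffun 'I_t -> V}} := [set f : {ffun 'I_t -> V} | [forall j, f j \in fwd (S j)]].

Definition W_edge (V : finType) (e : rel V) (t : nat) (S : 'I_t -> {set V * V})
  : rel (WT V t) :=
  fun (x y : (('I_t * (V + V)) + {ffun 'I_t -> V})%type) => match x, y with
  | inl (j, a), inl (j', b) => (j == j') && Mbar_edge e (S j) a b
  | inl (j, inr v), inr f => (f j == v) && (f \in active S)
  | inr f, inl (j, inr v) => (f j == v) && (f \in active S)
  | _, _ => false
  end.

Definition W_colors (V : finType) (t n : nat) (S : 'I_t -> {set V * V})
  (c : WT V t -> 'I_n) : {set 'I_n} := [set c (inr f) | f in active S].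

(* Main.v *)
Require Import Defs.
From mathcomp Require Import all_boot zify.
From Stdlib Require Classical_Prop IndefiniteDescription.
Set Implicit Arguments. Unset Strict Implicit. Unset Printing Implicit Defensive.

Lemma exists_notin (T : finType) (A : {set T}) : #|A| < #|T| -> exists x, x \notin A.
Proof.
move=> h; case: (pickP [pred x | x \notin A]) => [x Hx|H]; first by exists x.
have eA : A = setT by apply/setP => x; rewrite inE; move: (H x) => /= /negbFE.
by move: h; rewrite eA cardsT ltnn.
Qed.

Lemma relabel n (X : {set 'I_n}) (y : 'I_n) j :
  y \notin X -> #|X| + j < n ->
  exists s : 'I_n -> 'I_n, [/\ injective s, val (s y) = j & forall x, x \in X -> j < s x].
Proof.
move=> yX hc.
set L := enum (~: (y |: X)).
set s := take j L ++ y :: (drop j L ++ enum X).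
have sL : size L = n - (#|X|).+1.
  by rewrite /L -cardE cardsCs setCK cardsU1 yX card_ord add1n.
have jL : j <= size L by rewrite sL; lia.
have sz : size s = n.
  rewrite /s size_cat /= size_cat size_takel // size_drop sL -cardE. move: hc; move: (#|X|) => a h; clear -h; lia.
have ins : forall x, x \in s.
  move=> x; rewrite /s mem_cat in_cons mem_cat mem_enum.

  case: (x =P y) => [e|/eqP nxy]; first by rewrite /= orbT.
  case xX: (x \in X); first by rewrite !orbT.
  have xL : x \in L by rewrite /L mem_enum !inE negb_or nxy xX.
  have : x \in take j L ++ drop j L by rewrite cat_take_drop.
  by rewrite mem_cat => /orP [->|->]; rewrite ?orbT.
have lt : forall x, index x s < n by move=> x; rewrite -{2}sz index_mem.
exists (fun x => Ordinal (lt x)); split.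
- move=> x1 x2 [] e; by rewrite -(nth_index y (ins x1)) e nth_index.
- rewrite /= /s index_cat.
  have -> : (y \in take j L) = false.
    apply/negP => /mem_take; rewrite /L mem_enum !inE eqxx //.
  by rewrite /= eqxx size_takel ?addn0 //; lia.
- move=> x xX /=; rewrite /s index_cat.
  have -> : (x \in take j L) = false.
    apply/negP => /mem_take; rewrite /L mem_enum !inE xX orbT //.
  rewrite size_takel //=.
  have -> : (y == x) = false by apply/negP => /eqP ey; move: yX; rewrite ey xX.
  lia.
Qed.

Lemma reach_sub (V : finType) (e : rel V) n r S :
  reachable (removal_step n r e) (type2_full e) S -> S \subset type2_full e.
Proof.
elim => [|y z _ IH [p _ [-> _]]]; first exact: subxx.
by apply: subset_trans IH; apply: subsetDl.
Qed.

Lemma Mbar_proper (V : finType) (e : rel V) (S : {set V * V}) n (d : V + V -> 'I_n) :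
  (forall u w, e u w -> d (inl u) != d (inl w)) ->
  (forall v w, (v, w) \in S -> d (inr v) != d (inl w)) ->
  proper_col (Mbar_edge e S) d.
Proof.
move=> h1 h2 [x|x] [y|y] //=; [exact: h1| |exact: h2].
by move=> /h2; rewrite eq_sym.
Qed.

Lemma myc (V : finType) (e : rel V) n :
  2 <= n -> symmetric e -> ~ colorable e n.-1 ->
  forall c : V + V -> 'I_n, proper_col (Mbar_edge e (type2_full e)) c ->
  #|fwd_colors (type2_full e) c| <= n.-1 -> False.
Proof.
move=> n2 esym ncol c cpr cF.
have [al alF] : exists al, al \notin fwd_colors (type2_full e) c.
  apply: exists_notin; rewrite card_ord.
  move: cF; move: (#|_|) => a; lia.
have n0 : 0 < n by lia.
have n1 : 1 < n by lia.
have [be bea] : exists be : 'I_n, be != al.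
  case: (al =P Ordinal n0) => [->|/eqP h]; last by exists (Ordinal n0); rewrite eq_sym.
  by exists (Ordinal n1); apply/eqP => /(congr1 val).
have fwdE : forall u w, e u w -> u \in fwd (type2_full e).
  by move=> u w euw; rewrite inE; apply/existsP; exists w; rewrite inE.
pose c0 v := if c (inl v) == al then (if v \in fwd (type2_full e) then c (inr v) else be)
             else c (inl v).
have h0 : forall v, c0 v != al.
  move=> v; rewrite /c0; case: ifP => [_|/negbT //]; case: ifP => vf //.
  by apply: contraNneq alF => <-; apply: imset_f.
have cp0 : forall u w, e u w -> c0 u != c0 w.
  move=> u w euw.
  have cuw := cpr (inl u) (inl w) euw.
  have cuw2 : c (inr u) != c (inl w) by apply: (cpr (inr u) (inl w)); rewrite /= inE.
  have cwu2 : c (inr w) != c (inl u) by apply: (cpr (inr w) (inl u)); rewrite /= inE esym.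
  rewrite /c0 (fwdE _ _ euw) (fwdE w u); last by rewrite esym.
  case: (c (inl u) =P al) => [eu|_].
    have -> : (c (inl w) == al) = false by apply/negbTE; rewrite -eu eq_sym.
    done.
  case: (c (inl w) =P al) => [ew|_] //.
  by rewrite eq_sym.
have nn : 0 < n.-1 by lia.
pose c1 v := odflt (Ordinal nn) (unlift al (c0 v)).
apply: ncol; exists c1 => u w euw.
have key : forall v, c0 v = lift al (c1 v).
  move=> v; have h0' : al != c0 v by rewrite eq_sym h0.
  have [j e1 e2] := unlift_some h0'.
  by rewrite /c1 e2 /=.
apply: contraNneq (cp0 u w euw) => e1.
by rewrite !key e1.
Qed.

Lemma nonadm (V : finType) (e : rel V) n r S :
  2 <= n -> symmetric e -> ~ colorable e n.-1 -> r <= n ->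
  reachable (removal_step n r e) (type2_full e) S -> ~ admits n r e S.
Proof.
move=> n2 esym ncol rn; elim => [|y z _ _ [p _ [_ H]]] //.
move=> [c [cpr cF]]; apply: (myc n2 esym ncol cpr).
apply: leq_trans cF _; lia.
Qed.

Lemma maxadm (V : finType) (e : rel V) n r (S : {set V * V}) p :
  (forall S', ~ removal_step n r e S S') -> p \in S -> admits n r e (S :\ p).
Proof.
move=> H pS; apply: Classical_Prop.NNPP => na; apply: (H (S :\ p)).
by exists p.
Qed.

Lemma fwd_nonempty (V : finType) (e : rel V) n r (S : {set V * V}) :
  ~ admits n r e S -> colorable e n -> exists v, v \in fwd S.
Proof.
move=> na [phi phP]; apply: Classical_Prop.NNPP => hne; apply: na.
exists (fun x => match x with inl v => phi v | inr v => phi v end); split.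
  apply: Mbar_proper => [u w /phP //|v w vwS].
  by exfalso; apply: hne; exists v; rewrite inE; apply/existsP; exists w.
suff e0 : fwd S = set0 by rewrite /fwd_colors e0 imset0 cards0.
apply/setP => v; rewrite in_set0; apply/negbTE/negP => hv; apply: hne; by exists v.
Qed.

Lemma type2E (V : finType) (e : rel V) (S : {set V * V}) v w :
  S \subset type2_full e -> (v, w) \in S -> e v w.
Proof. by move=> /subsetP sS /sS; rewrite inE. Qed.

Lemma fwdP (V : finType) (S : {set V * V}) v : reflect (exists w, (v, w) \in S) (v \in fwd S).
Proof. by rewrite inE; apply: existsP. Qed.

Lemma copy_col (V : finType) (e : rel V) n j (S : {set V * V}) a :
  j < n -> ~ admits n (n - j) e S ->
  (forall p, p \in S -> admits n (n - j) e (S :\ p)) ->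
  S \subset type2_full e -> a \in fwd S ->
  exists d : V + V -> 'I_n, [/\ proper_col (Mbar_edge e S) d, val (d (inr a)) = j
     & forall v, v \in fwd S -> v != a -> j < d (inr v)].
Proof.
move=> jn na mx sub /fwdP [u pS].
have [c [cpr cF]] := mx _ pS.
pose c' x := if x == inr a then c (inl a) else c x.
have c'l : forall w, c' (inl w) = c (inl w) by [].
have c'r : forall v, c' (inr v) = if v == a then c (inl a) else c (inr v) by [].
have c'p : proper_col (Mbar_edge e S) c'.
  apply: Mbar_proper => [u' w euw|v w vwS].
    by rewrite !c'l; apply: (cpr (inl u') (inl w)).
  rewrite c'r c'l; case: (v =P a) => [ea|/eqP va].
    apply: (cpr (inl a) (inl w)); rewrite /=; apply: (type2E sub); by rewrite -ea.
  apply: (cpr (inr v) (inl w)); rewrite /= !inE vwS andbT.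
  by apply: contra va => /eqP [->].
have fwdD : forall v, v \in fwd S -> v != a -> v \in fwd (S :\ (a, u)).
  move=> v /fwdP [w vw] va; apply/fwdP; exists w; rewrite !inE vw andbT.
  by apply: contra va => /eqP [->].
set X := [set c' (inr v) | v in fwd S :\ a].
have Xsub : X \subset fwd_colors (S :\ (a, u)) c.
  apply/subsetP => x /imsetP [v]; rewrite in_setD1 => /andP [va vf] ->.
  rewrite c'r (negbTE va); apply: imset_f; exact: fwdD.
have cX : #|X| <= (n - j).-1 := leq_trans (subset_leq_card Xsub) cF.
have yX : c (inl a) \notin X.
  apply/negP => yX; apply: na; exists c'; split => //.
  apply: leq_trans cX; apply: subset_leq_card; apply/subsetP => x /imsetP [v vf ->].
  case: (v =P a) => [->|/eqP va]; first by rewrite c'r eqxx.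
  by apply: imset_f; rewrite in_setD1 va.
have hc : #|X| + j < n by move: cX; move: (#|X|) => x; lia.
have [s [sinj sy sX]] := relabel yX hc.
exists (fun x => s (c' x)); split.
- by move=> x y /(c'p x y); rewrite (inj_eq sinj).
- by rewrite c'r eqxx. 
- move=> v vf va; apply: sX; apply: imset_f; by rewrite in_setD1 va.
Qed.

Lemma inlE (A B : eqType) (x y : A) : (inl x == inl y :> A + B) = (x == y). Proof. by []. Qed.
Lemma inrE (A B : eqType) (x y : B) : (inr x == inr y :> A + B) = (x == y). Proof. by []. Qed.
Lemma inlrE (A B : eqType) (x : A) (y : B) : (inl x == inr y :> A + B) = false. Proof. by []. Qed.
Lemma inrlE (A B : eqType) (x : B) (y : A) : (inr x == inl y :> A + B) = false. Proof. by []. Qed.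

Lemma copy_del2 (V : finType) (e : rel V) n j (S : {set V * V}) v u :
  j.+1 < n -> admits n (n - j) e (S :\ (v, u)) ->
  exists d : V + V -> 'I_n, proper_col (del_edge (Mbar_edge e S) (inr v) (inl u)) d /\
     forall w, w \in fwd S -> j < d (inr w).
Proof.
move=> jn [c [cpr cF]].
set X0 := fwd_colors (S :\ (v, u)) c.
pose yv := if v \in fwd (S :\ (v, u)) then c (inr v) else odflt (c (inr v)) [pick z in X0].
pose c' x := if x == inr v then yv else c x.
have c'l : forall w, c' (inl w) = c (inl w) by [].
have c'r : forall w, c' (inr w) = if w == v then yv else c (inr w) by [].
set X := yv |: X0.
have cX : #|X| <= (n - j).-1.
  rewrite cardsU1; case: (boolP (yv \in X0)) => h; first by rewrite add0n.
  suff -> : #|X0| = 0 by move: jn; clear; lia.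
  move: h; rewrite /yv; case: ifP => vf.
    by move=> h; exfalso; move: h; rewrite /X0 imset_f.
  case: pickP => [z zX|none]; first by rewrite /= zX.
  by move=> _; apply: eq_card0 => z; exact: none.
have key : forall x y, (x, y) \in S -> ~~ ((x == v) && (y == u)) -> c' (inr x) != c' (inl y).
  move=> x y xyS nd; rewrite c'r c'l.
  have xyS' : (x == v) -> (x, y) \in S :\ (v, u).
    move=> /eqP xv; rewrite !inE xyS andbT; apply: contra nd => /eqP [-> ->].
    by rewrite !eqxx.
  case: (x =P v) => [xv|/eqP xv].
    subst x; have h := xyS' (eqxx v).
    have vf : v \in fwd (S :\ (v, u)) by apply/fwdP; exists y.
    rewrite /= /yv vf; exact: (cpr (inr v) (inl y) h).
  rewrite /=; apply: (cpr (inr x) (inl y)); rewrite /= !inE xyS andbT.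
  by apply: contra xv => /eqP [->].
have c'p : proper_col (del_edge (Mbar_edge e S) (inr v) (inl u)) c'.
  move=> [x|x] [y|y] /andP [] /=.
  - by move=> exy _; rewrite !c'l; apply: (cpr (inl x) (inl y)).
  - move=> yxS; rewrite ?inlE ?inlrE ?inrlE ?inrE /= => nd.
    rewrite eq_sym; apply: key => //; by rewrite andbC.
  - move=> xyS; rewrite ?inlE ?inlrE ?inrlE ?inrE /= ?orbF => nd.
    by apply: key.
  - by [].
have [y0 y0X] : exists y0, y0 \notin X by apply: exists_notin; rewrite card_ord; move: cX jn; move: (#|X|) => a; lia.
have hc : #|X| + j < n by move: cX jn; move: (#|X|) => a; lia.
have [s [sinj _ sX]] := relabel y0X hc.
exists (fun x => s (c' x)); split.
  by move=> x y /(c'p x y); rewrite (inj_eq sinj).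
move=> w wf; apply: sX; rewrite c'r; case: (w =P v) => [_|/eqP wv]; first by rewrite setU11.
rewrite setU1r // /X0; apply: imset_f; move: wf => /fwdP [t wt]; apply/fwdP; exists t.
by rewrite !inE wt andbT; apply: contra wv => /eqP [->].
Qed.

Lemma copy_del1 (V : finType) (e : rel V) n j (S : {set V * V}) u w :
  j.+1 < n -> colorable (del_edge e u w) n.-1 ->
  exists d : V + V -> 'I_n, proper_col (del_edge (Mbar_edge e S) (inl u) (inl w)) d /\
     forall v, j < d (inr v).
Proof.
move=> jn [psi psP].
have hn : n.-1 < n by lia.
have hl : n.-1 <= n by lia.
exists (fun x => match x with inl x => widen_ord hl (psi x) | inr _ => Ordinal hn end); split; last first.
  by move=> v /=; lia.
move=> [x|x] [y|y] /andP [] /=.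
- move=> exy; rewrite ?inlE ?inlrE /= => nd.
  have := psP x y; rewrite /del_edge exy nd => /(_ isT) h.
  by apply: contra h => /eqP [] /val_inj ->.
- move=> _ _; apply/eqP => /(congr1 val) /= h; move: (ltn_ord (psi x)); lia.
- move=> _ _; apply/eqP => /(congr1 val) /= h; move: (ltn_ord (psi y)); lia.
- by [].
Qed.

Lemma copy_ge (V : finType) (e : rel V) n j (S : {set V * V}) :
  j < n -> ~ admits n (n - j) e S ->
  (forall p, p \in S -> admits n (n - j) e (S :\ p)) ->
  S \subset type2_full e -> colorable e n ->
  exists d : V + V -> 'I_n, proper_col (Mbar_edge e S) d /\
     forall v, v \in fwd S -> j <= d (inr v).
Proof.
move=> jn na mx sub [phi phP].
case: (pickP (mem (fwd S))) => [a af|none].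
  have [d [dp da dv]] := copy_col jn na mx sub af.
  exists d; split => // v vf; case: (v =P a) => [->|/eqP va]; first by rewrite da.
  exact: ltnW (dv v vf va).
exists (fun x => match x with inl v => phi v | inr v => phi v end); split.
  apply: Mbar_proper => [x y /phP //|x y xyS]; apply: phP; exact: type2E xyS.
by move=> v; move: (none v) => /= ->.
Qed.

Lemma free n m (D : 'I_m -> 'I_n) (j0 : 'I_m) :
  (forall j : 'I_m, j <= D j) -> j0 < D j0 -> m <= n ->
  exists x : 'I_n, (x < m) && [forall j, D j != x].
Proof.
move=> hD hj0 mn; apply: Classical_Prop.NNPP => H.
have key : forall t (j : 'I_m), j < t -> val (D j) = j.
  elim => [//|t IH] j jt.
  case: (ltngtP j t) => [jt'|jt'|ejt]; [exact: IH | by move: jt jt'; clear; lia |].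
  have tm : t < m by rewrite -ejt.
  have tn : t < n by lia.
  have : ~~ [forall j', D j' != Ordinal tn].
    apply/negP => hf; apply: H; exists (Ordinal tn); by rewrite /= tm hf.
  case/forallPn => j' /negPn /eqP Dj'.
  have jle := hD j'; rewrite Dj' /= in jle.
  case: (ltngtP j' t) => [jt''|jt''|ej'].
  - by have := IH j' jt''; rewrite Dj' /=; lia.
  - by move: jle jt''; clear; lia.
  have -> : j = j' by apply: val_inj; rewrite /= ejt ej'.
  by rewrite Dj'.
have := key m j0 (ltn_ord j0); rewrite /= => e; by rewrite e ltnn in hj0.
Qed.

Definition freec n m (D : 'I_m -> 'I_n) (d0 : 'I_n) :=
  odflt d0 [pick x : 'I_n | (x < m) && [forall j, D j != x]].

Lemma freecP n m (D : 'I_m -> 'I_n) d0 (j0 : 'I_m) :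
  (forall j : 'I_m, j <= D j) -> j0 < D j0 -> m <= n ->
  (freec D d0 < m) /\ forall j, D j != freec D d0.
Proof.
move=> hD hj0 mn; have [x hx] := free hD hj0 mn.
rewrite /freec; case: pickP => [y /andP [ym /forallP hy]|none] /=; first by split.
by move: (none x); rewrite hx.
Qed.

Lemma W_edge_cases (V : finType) (e : rel V) t (S : 'I_t -> {set V * V}) (x y : WT V t) :
  W_edge e S x y ->
  (exists j a b, [/\ x = inl (j, a), y = inl (j, b) & Mbar_edge e (S j) a b]) \/
  (exists j (f : {ffun 'I_t -> V}), [/\ x = inl (j, inr (f j)), y = inr f & f \in active S]) \/
  (exists j (f : {ffun 'I_t -> V}), [/\ x = inr f, y = inl (j, inr (f j)) & f \in active S]).
Proof.
case: x => [[j a]|f]; case: y => [[j' b]|g] //=.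
- by case: a => [u|v] /andP [/eqP <- h]; left; do 3 eexists; by split.
- case: a => [u|v] //= /andP [/eqP <- gA]; right; left; by exists j, g.
- case: b => [u|v] //= /andP [/eqP <- fA]; right; right; by exists j', f.
Qed.

Definition mkC n t (V : finType) (dd : 'I_t -> V + V -> 'I_n)
  (h : {ffun 'I_t -> V} -> 'I_n) : WT V t -> 'I_n :=
  fun x : (('I_t * (V + V)) + {ffun 'I_t -> V})%type =>
    match x with inl (j, z) => dd j z | inr f => h f end.

Lemma card_lt_bound n (A : {set 'I_n}) b : b <= n -> (forall x, x \in A -> x < b) -> #|A| <= b.
Proof.
move=> bn H.
have sub : A \subset [set widen_ord bn t | t : 'I_b].
  apply/subsetP => x xA; apply/imsetP; exists (Ordinal (H x xA)) => //; exact: val_inj.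
apply: leq_trans (subset_leq_card sub) _.
by apply: leq_trans (leq_imset_card _ _) _; rewrite card_ord.
Qed.

Lemma W_colors_bound n t (V : finType) (S : 'I_t -> {set V * V}) dd (h : {ffun 'I_t -> V} -> 'I_n) b :
  b <= n -> (forall f, f \in active S -> h f < b) ->
  #|W_colors S (@mkC n t V dd h)| <= b.
Proof.
move=> bn H; apply: card_lt_bound => // x /imsetP [f fA ->]; exact: H.
Qed.

Lemma del_edgeC (T : finType) (E : rel T) a b n (c : T -> 'I_n) :
  proper_col (del_edge E a b) c -> proper_col (del_edge E b a) c.
Proof.
move=> h x y /andP [E' nd]; apply: h; rewrite /del_edge E' /=.
by rewrite orbC.
Qed.

Lemma ffun_neq (I : finType) (T : eqType) (f g : {ffun I -> T}) :
  f != g -> exists j, f j != g j.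
Proof.
move=> fg; apply: Classical_Prop.NNPP => H; move/negP: fg; apply; apply/eqP/ffunP => j.
apply/eqP; apply: Classical_Prop.NNPP => ne; apply: H; exists j; exact/negP.
Qed.

Theorem lemma4 (k : nat) (V : finType) (e : rel V) (i : nat)
    (S : 'I_i.-1 -> {set V * V}) :
  4 <= k -> simple_graph e -> critical e k.-1 ->
  triangle_free e -> pentagon_free e ->
  0 < i -> i <= k.-1 ->
  (forall j : 'I_i.-1, is_Mr k.-1 (k.-1 - j) e (S j)) ->
  [/\ (forall a, a \in active S ->
         exists c : WT V i.-1 -> 'I_k.-1,
           [/\ proper_col (W_edge e S) c, #|W_colors S c| <= i
             & forall f, f \in active S -> f != a -> c (inr f) != c (inr a)]),
      (forall c : WT V i.-1 -> 'I_k.-1, proper_col (W_edge e S) c ->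
         i <= #|W_colors S c|)
    & (forall x y, W_edge e S x y ->
         exists c : WT V i.-1 -> 'I_k.-1,
           proper_col (del_edge (W_edge e S) x y) c /\ #|W_colors S c| <= i.-1)].
Proof.
move=> k4 [esym irr] [ncol col dele delv] _ _ i0 ik HS.
set n := k.-1 in ncol col dele delv ik HS *.
have n2 : 2 <= n by rewrite /n; lia.
have mn : i.-1 < n by lia.
have F1 : forall j : 'I_i.-1, ~ admits n (n - j) e (S j).
  move=> j; case: (HS j) => R _; apply: (nonadm n2 esym ncol _ R); lia.
have F2 : forall (j : 'I_i.-1) p, p \in S j -> admits n (n - j) e (S j :\ p).
  by move=> j p; apply: maxadm (HS j).2.
have Fs : forall j, S j \subset type2_full e by move=> j; apply: reach_sub (HS j).1.
have jn : forall j : 'I_i.-1, j.+1 < n by move=> j; have := ltn_ord j; lia.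
have actP : forall f, f \in active S -> forall j, f j \in fwd (S j).
  by move=> f; rewrite inE => /forallP.
have n0 : 0 < n by lia.
pose d0 : 'I_n := Ordinal n0.
have special : forall a, a \in active S -> exists dd : 'I_i.-1 -> V + V -> 'I_n,
   forall j, [/\ proper_col (Mbar_edge e (S j)) (dd j), val (dd j (inr (a j))) = j
     & forall v, v \in fwd (S j) -> v != a j -> j < dd j (inr v)].
  move=> a aA.
  have H := fun j => copy_col (ltnW (jn j)) (F1 j) (F2 j) (Fs j) (actP a aA j).
  exists (fun j => proj1_sig (IndefiniteDescription.constructive_indefinite_description _ (H j))).
  move=> j; exact: proj2_sig (IndefiniteDescription.constructive_indefinite_description _ (H j)).
have hfreeS : forall (a : {ffun 'I_i.-1 -> V}) (dd : 'I_i.-1 -> V + V -> 'I_n),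
   (forall j, [/\ proper_col (Mbar_edge e (S j)) (dd j), val (dd j (inr (a j))) = j
     & forall v, v \in fwd (S j) -> v != a j -> j < dd j (inr v)]) ->
   forall f, f \in active S -> f != a ->
   (freec (fun j => dd j (inr (f j))) d0 < i.-1) /\
   forall j, dd j (inr (f j)) != freec (fun j => dd j (inr (f j))) d0.
  move=> a dd Hdd f fA fa.
  have [j0 hj0] := ffun_neq fa.
  apply: (@freecP _ _ _ d0 j0); last exact: ltnW.
    move=> j; case: (Hdd j) => _ e1 e2; case: (f j =P a j) => [->|/eqP ne]; first by rewrite e1.
    exact: ltnW (e2 _ (actP f fA j) ne).
  by case: (Hdd j0) => _ _ e2; apply: e2 => //; exact: actP.
split.
-
  move=> a aA; have [dd Hdd] := special a aA.
  have hm : i.-1 < n by [].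
  pose h f := if f == a then Ordinal hm else freec (fun j => dd j (inr (f j))) d0.
  exists (mkC dd h); split.
  + move=> x y /W_edge_cases [[j [a' [b' [-> -> E]]]] | [[j [f [-> -> fA]]] | [j [f [-> -> fA]]]]].
    * by case: (Hdd j) => P _ _; apply: P.
    * rewrite /= /h; case: (f =P a) => [->|/eqP fa].
        case: (Hdd j) => _ e1 _; apply/eqP => /(congr1 val); rewrite /= e1 => ej.
        by move: (ltn_ord j); rewrite ej ltnn.
      by have [_ ] := hfreeS a dd Hdd f fA fa; apply.
    * rewrite /= /h eq_sym; case: (f =P a) => [->|/eqP fa].
        case: (Hdd j) => _ e1 _; apply/eqP => /(congr1 val); rewrite /= e1 => ej.
        by move: (ltn_ord j); rewrite ej ltnn.
      by have [_ ] := hfreeS a dd Hdd f fA fa; apply.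
  + apply: W_colors_bound; first by [].
    move=> f fA; rewrite /h; case: (f =P a) => [_|/eqP fa]; first by rewrite /=; lia.
    have [H _] := hfreeS a dd Hdd f fA fa; lia.
  + move=> f fA fa; rewrite /= /h (negbTE fa) eqxx.
    have [H _] := hfreeS a dd Hdd f fA fa.
    by apply/eqP => /(congr1 val) /= ef; move: H; rewrite ef ltnn.
-
  move=> C Cp.
  have ex : forall j, exists v, v \in fwd (S j) by move=> j; exact: fwd_nonempty (F1 j) col.
  pose g0 := [ffun j => xchoose (ex j)].
  have g0A : g0 \in active S.
    by rewrite inE; apply/forallP => j; rewrite ffunE; exact: xchooseP.
  pose A t (g : {ffun 'I_i.-1 -> V}) :=
    [set f in active S | [forall j : 'I_i.-1, (t <= j) ==> (f j == g j)]].
  have claim : forall t, t <= i.-1 -> forall g, g \in active S ->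
      t < #|[set C (inr f) | f in A t g]|.
    elim => [|t IH] tm g gA.
      apply/card_gt0P; exists (C (inr g)); apply: imset_f; rewrite in_set gA /=.
      by apply/forallP => j; rewrite eqxx ?implybT.
    have tm' : t < i.-1 by [].
    pose J : 'I_i.-1 := Ordinal tm'.
    set U := [set C (inr f) | f in A t.+1 g].
    rewrite ltnNge; apply/negP => hU.
    pose gv v := [ffun j => if j == J then v else g j].
    have gvJ : forall v, gv v J = v by move=> v; rewrite ffunE eqxx.
    have gvA : forall v, v \in fwd (S J) -> gv v \in active S.
      move=> v vf; rewrite inE; apply/forallP => j; rewrite ffunE.
      case: (j =P J) => [->|_] //; exact: actP.
    have sub : forall v, A t (gv v) \subset A t.+1 g.
      move=> v; apply/subsetP => f; rewrite !in_set => /andP [fA /forallP fg]; rewrite fA /=.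
      apply/forallP => j; apply/implyP => tj; have := fg j; rewrite ffunE.
      have -> : (j == J) = false.
        by apply/negbTE/eqP => /(congr1 val) /= ej; move: tj; rewrite ej ltnn.
      by move/implyP; apply; apply: ltnW.
    have Uv : forall v, v \in fwd (S J) -> [set C (inr f) | f in A t (gv v)] = U.
      move=> v vf; apply/eqP; rewrite eqEcard imsetS ?sub //=.
      exact: leq_trans hU (IH (ltnW tm) (gv v) (gvA v vf)).
    have notin : forall v, v \in fwd (S J) -> C (inl (J, inr v)) \notin U.
      move=> v vf; rewrite -(Uv v vf); apply/imsetP => [[f]].
      rewrite in_set => /andP [fA /forallP fg] e1.
      have fJ : f J == v by have := fg J; rewrite gvJ; move/implyP; apply; exact: leqnn.
      have := Cp (inl (J, inr v)) (inr f); rewrite /= fJ fA => /(_ isT).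
      by rewrite e1 eqxx.
    have gJf : g J \in fwd (S J) by exact: actP.
    have Ucard : t.+1 <= #|U|.
      rewrite -(Uv _ gJf); apply: IH => //; [exact: ltnW | exact: gvA].
    apply: (F1 J); exists (fun z => C (inl (J, z))); split.
      by move=> a b E; apply: (Cp (inl (J, a)) (inl (J, b))); rewrite /= eqxx; case: a E.
    have sub2 : fwd_colors (S J) (fun z => C (inl (J, z))) \subset ~: U.
      apply/subsetP => x /imsetP [v vf ->]; rewrite inE; exact: notin.
    apply: leq_trans (subset_leq_card sub2) _.
    have := cardsC U; rewrite card_ord /=; move: Ucard; move: (#|U|) (#|~: U|) => a b.
    lia.
  have eA : A i.-1 g0 = active S.
    apply/setP => f; rewrite in_set; apply: andb_idr => _.
    by apply/forallP => j; rewrite leqNgt ltn_ord.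
  have := claim i.-1 (leqnn _) g0 g0A; rewrite eA => H.
  rewrite /W_colors; apply: leq_trans H; by rewrite prednK.
-
  have caseB : forall (j0 : 'I_i.-1) (g : {ffun 'I_i.-1 -> V}), g \in active S ->
      exists c : WT V i.-1 -> 'I_n,
        proper_col (del_edge (W_edge e S) (inl (j0, inr (g j0))) (inr g)) c /\
        #|W_colors S c| <= i.-1.
    move=> j0 g gA; have [dd Hdd] := special g gA.
    have hj : j0 < n by have := ltn_ord j0; lia.
    pose h f := if f == g then Ordinal hj else freec (fun j => dd j (inr (f j))) d0.
    exists (mkC dd h); split.
    + move=> x y /andP [].
      move=> /W_edge_cases [[j [a' [b' [-> -> E]]]] | [[j [f [-> -> fA]]] | [j [f [-> -> fA]]]]] nd.
      * by case: (Hdd j) => P _ _; apply: P.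
      * rewrite /= /h; case: (f =P g) => [ef|/eqP fg].
          subst f; case: (Hdd j) => _ e1 _; apply/eqP => /(congr1 val); rewrite /= e1 => ej.
          have ej' : j = j0 by apply: val_inj.
          by subst j; move: nd; rewrite !eqxx.
        by have [_] := hfreeS g dd Hdd f fA fg; apply.
      * rewrite /= /h eq_sym; case: (f =P g) => [ef|/eqP fg].
          subst f; case: (Hdd j) => _ e1 _; apply/eqP => /(congr1 val); rewrite /= e1 => ej.
          have ej' : j = j0 by apply: val_inj.
          by subst j; move: nd; rewrite !eqxx ?orbT.
        by have [_] := hfreeS g dd Hdd f fA fg; apply.
    + apply: W_colors_bound; first exact: ltnW.
      move=> f fA; rewrite /h; case: (f =P g) => [_|/eqP fg] /=; first exact: ltn_ord.
      by case: (hfreeS g dd Hdd f fA fg).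
  have caseA : forall (j0 : 'I_i.-1) a b, Mbar_edge e (S j0) a b ->
      exists c : WT V i.-1 -> 'I_n,
        proper_col (del_edge (W_edge e S) (inl (j0, a)) (inl (j0, b))) c /\
        #|W_colors S c| <= i.-1.
    move=> j0 a b E.
    have [dj [djp djf]] : exists d : V + V -> 'I_n,
        proper_col (del_edge (Mbar_edge e (S j0)) a b) d /\
        forall v, v \in fwd (S j0) -> j0 < d (inr v).
      case: a b E => [u|v] [w|w] //= E.
      - have [d [dp df]] := copy_del1 (S j0) (jn j0) (dele u w E).
        by exists d; split.
      - have [d [dp df]] := copy_del2 (jn j0) (F2 j0 _ E).
        by exists d; split => //; apply: del_edgeC.
      - have [d [dp df]] := copy_del2 (jn j0) (F2 j0 _ E).
        by exists d.
    have Hg := fun j => copy_ge (ltnW (jn j)) (F1 j) (F2 j) (Fs j) col.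
    pose dg j := proj1_sig (IndefiniteDescription.constructive_indefinite_description _ (Hg j)).
    have dgP : forall j, proper_col (Mbar_edge e (S j)) (dg j) /\
        forall v, v \in fwd (S j) -> j <= dg j (inr v).
      move=> j; exact: proj2_sig (IndefiniteDescription.constructive_indefinite_description _ (Hg j)).
    pose dd j := if j == j0 then dj else dg j.
    have ddge : forall f : {ffun 'I_i.-1 -> V}, f \in active S -> forall j : 'I_i.-1, j <= dd j (inr (f j)).
      move=> f fA j; rewrite /dd; case: (j =P j0) => [->|_].
        exact: ltnW (djf _ (actP f fA j0)).
      exact: (dgP j).2 (actP f fA j).
    have ddj0 : forall f : {ffun 'I_i.-1 -> V}, f \in active S -> j0 < dd j0 (inr (f j0)).
      by move=> f fA; rewrite /dd eqxx; exact: djf (actP f fA j0).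
    pose h f := freec (fun j => dd j (inr (f j))) d0.
    have hP : forall f : {ffun 'I_i.-1 -> V}, f \in active S -> h f < i.-1 /\ forall j, dd j (inr (f j)) != h f.
      move=> f fA; exact: (@freecP _ _ _ d0 j0 (ddge f fA) (ddj0 f fA) (ltnW mn)).
    exists (mkC dd h); split; last first.
      apply: W_colors_bound; [exact: ltnW | by move=> f /hP []].
    move=> x y /andP [].
    move=> /W_edge_cases [[j [a' [b' [-> -> E']]]] | [[j [f [-> -> fA]]] | [j [f [-> -> fA]]]]] nd.
    + rewrite /= /dd; case: (j =P j0) => [ej|_]; last exact: (dgP j).1.
      subst j; apply: djp; rewrite /del_edge E' /=.
      by move: nd; rewrite !inlE !xpair_eqE !eqxx /=.
    + by case: (hP f fA) => _; apply.
    + by rewrite /= eq_sym; case: (hP f fA) => _; apply.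
  move=> x y /W_edge_cases [[j [a [b [-> -> E]]]] | [[j [f [-> -> fA]]] | [j [f [-> -> fA]]]]].
  + exact: caseA.
  + exact: caseB.
  + have [c [cp cc]] := caseB j f fA; exists c; split => //; exact: del_edgeC.
Qed.
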